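(* Let $2\leq d\leq k$ be integers, $\Sigma_k=\{\sigma_1,\ldots,\sigma_k\}$, $\Sigma_d=\{\sigma_1,\ldots,\sigma_d\}$. Consider $r\geq 2$ users over $\Sigma_k$, where user 1 has confusion graph $G_1=(\Sigma_k,\{ab\mid a\in\Sigma_k,\ b\in\Sigma_k\setminus\Sigma_d,\ a\neq b\})$ and users $2,\ldots,r$ have arbitrary confusion graphs $G_2,\ldots,G_r$ on $\Sigma_k$. If $(\alpha\log_2 d,R_2,\ldots,R_r)$ with $\alpha\in[0,1]$ is a feasible rate vector, then $\sum_{i=2}^r R_i\leq(1-\alpha)\log_2 k$.
   Context: Setting: a sender broadcasts a word of length $n$ over a finite alphabet $\Sigma$ to $r$ users; user $i$ has a confusion graph $G_i$ on vertex set $\Sigma$, where $ab$ is an edge iff user $i$ cannot distinguish letters $a$ and $b$. Two words $x,y\in\Sigma^n$ are distinguishable by user $i$ if there is a coordinate $t$ with $x_t\neq y_t$ and $x_ty_t$ not an edge of $G_i$. A vector $(m_1,\ldots,m_r)$ of positive integers is feasible for length $n$ if there is a map $E:[m_1]\times\cdots\times[m_r]\to\Sigma^n$ such that for every $i$ and all tuples $a,a'$ with $a_i\neq a'_i$, $E(a)$ and $E(a')$ are distinguishable by user $i$. A rate vector $(R_1,\ldots,R_r)$ is feasible if there is a sequence of feasible vectors for lengths $n\to\infty$ with $R_i=\lim_{n\to\infty}\frac{\log_2 m_i^{(n)}}{n}$ for all $i$. *)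

(* Defs.v *)
From Stdlib Require Import Reals.
From mathcomp Require Import all_boot.
Set Implicit Arguments. Unset Strict Implicit. Unset Printing Implicit Defensive.

(* Alphabet Sigma_k = 'I_k (sigma_{j+1} is the ordinal j).
   Words of length n over Sigma_k. *)
Definition word (k n : nat) := {ffun 'I_n -> 'I_k}.

Definition is_graph (k : nat) (G : rel 'I_k) : Prop :=
  (forall a b, G a b = G b a) /\ (forall a, G a a = false).

Definition distinguishable (k n : nat) (G : rel 'I_k) (x y : word k n) : Prop :=
  exists t : 'I_n, x t != y t /\ ~~ G (x t) (y t).

Definition feasible_vec (k r n : nat) (G : 'I_r -> rel 'I_k)
    (m : {ffun 'I_r -> nat}) : Prop :=
  (forall i, 0 < m i) /\
  exists E : {ffun 'I_r -> nat} -> word k n,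
    forall (i : 'I_r) (a a' : {ffun 'I_r -> nat}),
      (forall j, a j < m j) -> (forall j, a' j < m j) ->
      a i != a' i -> distinguishable (G i) (E a) (E a').

Local Open Scope R_scope.
Definition log2 (x : R) : R := ln x / ln 2.

Definition feasible_rate (k r : nat) (G : 'I_r -> rel 'I_k) (Rv : 'I_r -> R) : Prop :=
  exists (ns : nat -> nat) (ms : nat -> {ffun 'I_r -> nat}),
    (forall j, @feasible_vec k r (ns j) G (ms j)) /\
    (forall N, exists J, forall j, (J <= j)%N -> (N <= ns j)%N) /\
    (forall i, Un_cv (fun j => log2 (INR (ms j i)) / INR (ns j)) (Rv i)).

Definition G_first (k d : nat) : rel 'I_k :=
  fun a b => (a != b) && ((d <= a)%N || (d <= b)%N).

(* Main.v *)
Require Import Defs.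
From Stdlib Require Import Reals Lra.
From mathcomp Require Import all_boot.
Set Implicit Arguments. Unset Strict Implicit. Unset Printing Implicit Defensive.

Section StdHelp.
Local Open Scope R_scope.

Lemma cv_const (c : R) : Un_cv (fun _ => c) c.
Proof. intros eps He; exists 0%nat; intros; unfold R_dist; rewrite Rminus_diag Rabs_R0; lra. Qed.

Lemma cv_ext (u v : nat -> R) l : (forall j, u j = v j) -> Un_cv u l -> Un_cv v l.
Proof. intros E H eps He; destruct (H eps He) as [N HN]; exists N; intros n Hn; rewrite <- E; auto. Qed.

Lemma cv_sum_seq (I : Type) (s : seq I) (P : pred I) (u : I -> nat -> R) (l : I -> R) :
  (forall i, Un_cv (u i) (l i)) ->
  Un_cv (fun j => \big[Rplus/0]_(i <- s | P i) u i j) (\big[Rplus/0]_(i <- s | P i) l i).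
Proof.
move=> H; elim: s => [|a s IH].
  rewrite big_nil; apply: cv_ext (cv_const 0) => j; by rewrite big_nil.
rewrite big_cons; case Pa: (P a).
  apply: cv_ext (CV_plus _ _ _ _ (H a) IH) => j; by rewrite big_cons Pa.
apply: cv_ext IH => j; by rewrite big_cons Pa.
Qed.

Lemma big_mulc (I : Type) (s : seq I) (P : pred I) (F : I -> R) (c : R) :
  \big[Rplus/0]_(i <- s | P i) (F i * c) = (\big[Rplus/0]_(i <- s | P i) F i) * c.
Proof.
elim: s => [|a s IH]; first by rewrite !big_nil; ring.
by rewrite !big_cons; case: (P a); rewrite IH; ring.
Qed.

Lemma cv_le1 (u : nat -> R) l J : Un_cv u l -> (forall j, (J <= j)%N -> u j <= 1) -> l <= 1.
Proof.
move=> H Hu; apply: Rnot_lt_le => Hl.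
have [N HN] := H (l - 1) ltac:(lra).
have := HN (maxn N J) (leP (leq_maxl N J)).
have := Hu (maxn N J) (leq_maxr N J).
unfold R_dist; move=> h1 h2.
have := Rle_abs (l - u (maxn N J)); rewrite Rabs_minus_sym; lra.
Qed.

Lemma ln_prodn (I : Type) (s : seq I) (P : pred I) (a : I -> nat) :
  (forall i, (0 < a i)%N) ->
  ln (INR (\prod_(i <- s | P i) a i)) = \big[Rplus/0]_(i <- s | P i) ln (INR (a i)).
Proof.
move=> Ha; elim: s => [|x s IH]; first by rewrite !big_nil /= ln_1.
rewrite !big_cons; case: (P x) => //.
have p1 : (0 < \prod_(i <- s | P i) a i)%N by elim/big_ind: _ => // p q; rewrite muln_gt0 => ->.
rewrite mult_INR ln_mult ?IH //; apply: lt_0_INR; apply/ltP; by [apply: Ha|].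
Qed.

Lemma arith1 (a S n ld lk l2 : R) : 0 < n -> 0 < ld -> 0 < lk -> 0 < l2 ->
  a + ld / lk * S <= n * ld -> (a / l2) / n * (l2 / ld) + (S / l2) / n * (l2 / lk) <= 1.
Proof.
move=> hn hd hk h2 H.
have -> : (a / l2) / n * (l2 / ld) + (S / l2) / n * (l2 / lk) = (a + ld / lk * S) / (n * ld).
  field; lra.
apply (Rmult_le_reg_r (n * ld)); first nra.
rewrite Rmult_1_l; unfold Rdiv; rewrite Rmult_assoc Rinv_l; [lra | nra].
Qed.

Lemma zj_bound (I : Type) (s : seq I) (P : pred I) (a : R) (F : I -> R) (n ld lk l2 : R) :
  0 < n -> 0 < ld -> 0 < lk -> 0 < l2 ->
  a + ld / lk * (\big[Rplus/0]_(i <- s | P i) F i) <= n * ld ->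
  a / l2 / n * (l2 / ld) + \big[Rplus/0]_(i <- s | P i) (F i / l2 / n * (l2 / lk)) <= 1.
Proof.
move=> hn hd hk h2 H.
rewrite (eq_bigr (fun i => F i * (/ l2 * / n * (l2 / lk)))); last by move=> i _; unfold Rdiv; ring.
rewrite big_mulc.
have := arith1 hn hd hk h2 H.
set S := \big[Rplus/0]_(i <- s | P i) F i.
have -> : S * (/ l2 * / n * (l2 / lk)) = S / l2 / n * (l2 / lk) by unfold Rdiv; ring.
done.
Qed.

Lemma final_arith (S alpha ld lk l2 rv0 : R) : 0 < ld -> 0 < lk -> 0 < l2 ->
  rv0 = alpha * (ld / l2) -> rv0 * (l2 / ld) + S * (l2 / lk) <= 1 ->
  S <= (1 - alpha) * (lk / l2).
Proof.
move=> hd hk h2 -> H.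
have e1 : alpha * (ld / l2) * (l2 / ld) = alpha by field; lra.
rewrite e1 in H.
have H2 : S * (l2 / lk) <= 1 - alpha by lra.
have -> : S = S * (l2 / lk) * (lk / l2) by field; lra.
apply: Rmult_le_compat_r => //.
apply: Rlt_le; apply: Rdiv_lt_0_compat; lra.
Qed.

Lemma ln_pos (x : R) : 1 < x -> 0 < ln x.
Proof. move=> h; rewrite -ln_1; apply: ln_increasing => //; lra. Qed.

Lemma ln2_pos : 0 < ln 2.
Proof. have := ln_lt_2; lra. Qed.

End StdHelp.

From HB Require Import structures.
From mathcomp Require Import all_order all_algebra.
From mathcomp Require Import interval_inference classical_sets convex reals exp hoelder.
From mathcomp Require Import sequences.
From mathcomp Require Import ring lra.
From mathcomp Require Import Rstruct Rstruct_topology.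
Import Order.TTheory GRing.Theory Num.Theory.

Section R1.
Variable R : realType.
Local Open Scope ring_scope.

Lemma conv2 (e a b l : R) : 1 <= e -> 0 <= a -> 0 <= b -> 0 <= l -> l <= 1 ->
  (l * a + (1 - l) * b) `^ e <= l * a `^ e + (1 - l) * b `^ e.
Proof.
move=> e1 a0 b0 l0 l1.
have := @convex_powR R e e1 (Itv01 l0 l1) a b.
rewrite !inE /= !in_itv /= !andbT => /(_ a0 b0).
by rewrite !convRE /=.
Qed.

Lemma stepA (I : finType) (P : pred I) (u : I -> R) (M e : R) :
  1 <= e -> 0 <= M -> (forall i, P i -> M <= u i) ->
  \sum_(i | P i) u i `^ e <=
    (#|P|%:R - 1) * M `^ e + (M + (\sum_(i | P i) u i - #|P|%:R * M)) `^ e.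
Proof.
move=> e1 M0 Mu.
have e0 : e != 0 by apply/negP => /eqP ez; move: e1; rewrite ez; lra.
have sM : \sum_(i | P i) M = #|P|%:R * M by rewrite sumr_const mulr_natl.
set Y := \sum_(i | P i) u i - #|P|%:R * M.
have YE : Y = \sum_(i | P i) (u i - M) by rewrite /Y sumrB sM.
have Y0 : 0 <= Y by rewrite YE sumr_ge0 // => i Pi; rewrite subr_ge0 Mu.
have [Yz|Ypos] := eqVneq Y 0.
  have uM : forall i, P i -> u i = M.
    move=> i Pi; apply/eqP; rewrite -subr_eq0; apply/eqP.
    move: Yz; rewrite YE => /eqP; rewrite psumr_eq0; last first.
      by move=> j Pj; rewrite subr_ge0 Mu.
    by move=> /allP /(_ i (mem_index_enum i)); rewrite Pi /= => /eqP.
  rewrite Yz addr0 (eq_bigr (fun=> M `^ e)); last by move=> i Pi; rewrite uM.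
  rewrite sumr_const -mulr_natl; lra.
have Ygt : 0 < Y by rewrite lt_neqAle eq_sym Ypos Y0.
have h : forall i, P i -> u i `^ e <=
     ((u i - M) / Y) * (M + Y) `^ e + (1 - (u i - M) / Y) * M `^ e.
  move=> i Pi.
  have l0 : 0 <= (u i - M) / Y by rewrite divr_ge0 // subr_ge0 Mu.
  have l1 : (u i - M) / Y <= 1.
    rewrite ler_pdivrMr // mul1r YE (bigD1 i) //= lerDl sumr_ge0 // => j /andP [Pj _].
    by rewrite subr_ge0 Mu.
  have := conv2 e1 (addr_ge0 M0 Y0) M0 l0 l1.
  suff -> : (u i - M) / Y * (M + Y) + (1 - (u i - M) / Y) * M = u i by [].
  by field; rewrite Ypos.
apply: (le_trans (ler_sum _ h)).
rewrite big_split /= -!mulr_suml.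
have sl : \sum_(i | P i) ((u i - M) / Y) = 1.
  by rewrite -mulr_suml -YE divff.
rewrite -YE divff // mul1r sumrB sumr_const sl -mulr_natl mulr1.
lra.
Qed.

Lemma fld1 (M S d : R) : S != 0 -> d != 0 ->
 M + (S - d * M) = d * M / S * (S / d) + (1 - d * M / S) * S.
Proof. by move=> h1 h2; field; rewrite h1 h2. Qed.
Lemma fld2 (M S d : R) : S != 0 -> d != 0 ->
 M = d * M / S * (S / d) + (1 - d * M / S) * 0.
Proof. by move=> h1 h2; field; rewrite h1 h2. Qed.
Lemma fld3 (S d : R) : d != 0 -> d * (S / d) = S.
Proof. by move=> h2; field. Qed.

Lemma fld4 (a b x : R) : a != 0 -> b != 0 -> a / b * (b / a * x) = x.
Proof. by move=> h1 h2; field; rewrite h1 h2. Qed.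

Lemma keyI (I : finType) (P : pred I) (u : I -> R) (M e : R) :
  1 <= e -> 0 <= M -> (forall i, P i -> M <= u i) -> (0 < #|P|)%N ->
  \sum_(i | P i) u i `^ e + (#|P|%:R `^ e - #|P|%:R) * M `^ e
    <= (\sum_(i | P i) u i) `^ e.
Proof.
move=> e1 M0 Mu Ppos.
have e0 : e != 0 by apply/negP => /eqP ez; move: e1; rewrite ez; lra.
have A := stepA e1 M0 Mu.
set d := #|P|%:R in A *.
set S := \sum_(i | P i) u i in A *.
have d1 : 1 <= d by rewrite /d ler1n.
have K1 : 1 <= d `^ e by apply: le_trans d1 (le1r_powR d1 e1).
have sM : \sum_(i | P i) M = d * M by rewrite sumr_const -mulr_natl.
have dMS : d * M <= S by rewrite -sM /S ler_sum.
suff B : (M + (S - d * M)) `^ e + (d `^ e - 1) * M `^ e <= S `^ e by lra.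
have [Sz|Snz] := eqVneq S 0.
  have Mz : M = 0 by apply/eqP; rewrite eq_le M0 andbT; move: dMS; rewrite Sz; nra.
  by rewrite Sz Mz mulr0 !subr0 addr0 powR0 // mulr0 addr0.
have Sgt : 0 < S by rewrite lt_neqAle eq_sym Snz /=; nra.
have dgt : 0 < d by lra.
set th := d * M / S.
have th0 : 0 <= th by rewrite /th; apply: divr_ge0; [nra | lra].
have th1 : th <= 1 by rewrite /th ler_pdivrMr // mul1r.
have Sd0 : 0 <= S / d by rewrite divr_ge0 //; lra.
have h1 : M + (S - d * M) = th * (S / d) + (1 - th) * S.
  by rewrite /th fld1 // gt_eqF.
have h2 : M = th * (S / d) + (1 - th) * 0.
  by rewrite /th -fld2 // gt_eqF.
have c1 := conv2 e1 Sd0 (ltW Sgt) th0 th1.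
have c2 := conv2 e1 Sd0 (lexx 0) th0 th1.
rewrite -h1 in c1; rewrite -h2 powR0 // mulr0 addr0 in c2.
have hK : d `^ e * (S / d) `^ e = S `^ e.
  by rewrite -powRM; [rewrite fld3 // gt_eqF | lra | lra].
have c3 : (d `^ e - 1) * M `^ e <= (d `^ e - 1) * (th * (S / d) `^ e).
  by apply: ler_wpM2l => //; lra.
have hK' : (d `^ e - 1) * (th * (S / d) `^ e) = th * S `^ e - th * (S / d) `^ e.
  by rewrite -hK; ring.
lra.
Qed.

Lemma cardlt k d : (d <= k)%N -> #|(fun j : 'I_k => (j < d)%N)| = d.
Proof.
move=> dk.
have inj : injective (widen_ord dk) by move=> a b ab; apply/val_inj; exact: (congr1 val ab).
rewrite -[RHS](card_ord d) -(card_codom inj).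
apply: eq_card => j; rewrite unfold_in /=.
apply/idP/codomP.
  by move=> jd; exists (Ordinal jd); apply/val_inj.
by case=> i ->; rewrite unfold_in /=; exact: ltn_ord.
Qed.
Lemma cardnlt k d : (d <= k)%N -> #|(fun j : 'I_k => ~~ (j < d)%N)| = (k - d)%N.
Proof.
move=> dk; have h := cardC (fun j : 'I_k => (j < d)%N).
rewrite card_ord cardlt // in h.
apply/eqP; rewrite -(eqn_add2l d) h subnKC //.

Qed.
End R1.
Section Words.
Local Open Scope nat_scope.
Variables (k d : nat).
Definition wd n := {ffun 'I_n -> 'I_k}.
Definition Uset n (W : {set wd n}) : {set wd n} :=
 [set z : wd n | [forall t, z t < d] && [exists x in W, [forall t, (x t < d) ==> (z t == x t)]]].
Definition wcons n (j : 'I_k) (w : wd n) : wd n.+1 :=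
  [ffun t => if unlift ord0 t is Some t' then w t' else j].
Definition wtail n (x : wd n.+1) : wd n := [ffun t => x (lift ord0 t)].
Definition slice n (W : {set wd n.+1}) j : {set wd n} := [set w | wcons j w \in W].

Lemma wcons0 n j (w : wd n) : wcons j w ord0 = j.
Proof. by rewrite /wcons ffunE unlift_none. Qed.
Lemma wconsS n j (w : wd n) t : wcons j w (lift ord0 t) = w t.
Proof. by rewrite /wcons ffunE liftK. Qed.
Lemma wcons_inj n j : injective (@wcons n j).
Proof. by move=> w1 w2 e; apply/ffunP => t; rewrite -(wconsS j w1) e wconsS. Qed.
Lemma wconsK n (x : wd n.+1) : wcons (x ord0) (wtail x) = x.
Proof.
apply/ffunP => t; rewrite /wcons ffunE; case: unliftP => [t'|] -> //.
by rewrite ffunE.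
Qed.

Lemma card_slices n (W : {set wd n.+1}) : #|W| = \sum_(j : 'I_k) #|slice W j|.
Proof.
rewrite -sum1_card (partition_big (fun x : wd n.+1 => x ord0) predT) //=.
apply: eq_bigr => j _.
rewrite sum1_card.
have -> : #|slice W j| = #|wcons j @: slice W j| by rewrite card_imset //; apply: wcons_inj.
apply: eq_card => x; rewrite [in RHS]unfold_in /=.
apply/andP/imsetP.
  case=> xW /eqP x0; exists (wtail x); last by rewrite -x0 wconsK.
  by rewrite inE -x0 wconsK.
case=> w; rewrite inE => wW ->; by rewrite wW wcons0.
Qed.

Lemma UsetP n (W : {set wd n}) (z : wd n) :
  reflect ((forall t, z t < d) /\ exists2 x, x \in W & forall t, x t < d -> z t = x t)
    (z \in Uset W).
Proof.
rewrite inE; apply: (iffP andP).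
  case=> /forallP H /existsP [x /andP [xW /forallP xz]]; split => //.
  by exists x => // t /(implyP (xz t)) /eqP.
case=> H [x xW xz]; split; first by apply/forallP.
by apply/existsP; exists x; rewrite xW; apply/forallP => t; apply/implyP => /xz ->.
Qed.

Lemma slice_sub n (W : {set wd n.+1}) (j : 'I_k) : j < d ->
  (Uset (slice W j) :|: \bigcup_(i : 'I_k | ~~ (i < d)) Uset (slice W i))%SET
   \subset slice (Uset W) j.
Proof.
move=> jd; apply/fintype.subsetP => z; rewrite inE => Hz; rewrite inE.
have [i [Hi zU]] : exists i, (i = j \/ ~~ (i < d)) /\ z \in Uset (slice W i).
  case/orP: Hz => [zU|/bigcupP [i Hi zU]]; [by exists j; split; [left|] | by exists i; split; [right|]].
case/UsetP: zU => zd [x]; rewrite inE => xW xz.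
apply/UsetP; split.
  by move=> t; case: (unliftP ord0 t) => [t'|] ->; rewrite ?wconsS ?wcons0.
exists (wcons i x) => // t; case: (unliftP ord0 t) => [t'|] ->; rewrite ?wconsS ?wcons0.
  exact: xz.
case: Hi => [-> //|/negbTE -> //].
Qed.
End Words.

Section L.
Variable R : realType.
Local Open Scope ring_scope.

Lemma natpow (e : R) (a : nat) : 1 <= e -> a%:R <= a%:R `^ e.
Proof.
move=> e1; case: a => [|a]; first by rewrite powR_ge0.
by apply: le1r_powR => //; rewrite ler1n.
Qed.

Lemma Lmain (e : R) (k d : nat) : 1 <= e -> (d%:R : R) `^ e = k%:R -> (0 < d)%N -> (d <= k)%N ->
  forall n (W : {set wd k n}), (#|W|%:R : R) <= (#|Uset d W|%:R) `^ e.
Proof.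
move=> e1 dk' d0 dk; elim=> [|n IH] W.
  have sub : W \subset Uset d W.
    apply/fintype.subsetP => x xW; apply/UsetP; split; [by case | by exists x => // -[]].
  apply: le_trans _ (natpow _ e1); rewrite ler_nat; exact: subset_leq_card.
set V := (\bigcup_(i < k | ~~ (i < d)%N) Uset d (slice W i))%SET.
rewrite card_slices natr_sum (bigID (fun j : 'I_k => (j < d)%N)) /=.
have b1 : \sum_(j < k | (j < d)%N) (#|slice W j|%:R : R) <=
     \sum_(j < k | (j < d)%N) (#|Uset d (slice W j) :|: V|%:R) `^ e.
  apply: ler_sum => j _; apply: le_trans (IH _) _.
  apply: ge0_ler_powR; rewrite ?nnegrE ?ler_nat //; first lra.
  exact: subset_leq_card (finset.subsetUl _ _).
have b2 : \sum_(j < k | ~~ (j < d)%N) (#|slice W j|%:R : R) <= \sum_(j < k | ~~ (j < d)%N) (#|V|%:R) `^ e.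
  apply: ler_sum => j jd; apply: le_trans (IH _) _.
  apply: ge0_ler_powR; rewrite ?nnegrE ?ler_nat //; first lra.
  by apply: subset_leq_card; rewrite /V; exact: (finset.bigcup_sup j jd).
rewrite sumr_const cardnlt // -[_ *+ (k - d)%N]mulr_natl natrB // -dk' in b2.
have Mu : forall j : 'I_k, (j < d)%N -> (#|V|%:R : R) <= #|Uset d (slice W j) :|: V|%:R.
  by move=> j _; rewrite ler_nat; apply: subset_leq_card; apply: finset.subsetUr.
have K := @keyI R _ (fun j : 'I_k => (j < d)%N) (fun j => #|Uset d (slice W j) :|: V|%:R) _ _ e1 (ler0n _ _) Mu.
rewrite cardlt // in K.
have /K {}K : (0 < d)%N by [].
have b3 : (\sum_(j < k | (j < d)%N) (#|Uset d (slice W j) :|: V|%:R : R)) `^ e <= #|Uset d W|%:R `^ e.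
  apply: ge0_ler_powR; rewrite ?nnegrE ?sumr_ge0 //; first lra.
  rewrite -natr_sum ler_nat (card_slices (Uset d W)).
  apply: (@leq_trans (\sum_(j < k | (j < d)%N) #|slice (Uset d W) j|)).
    by apply: leq_sum => j jd; apply: subset_leq_card; apply: slice_sub.
  by rewrite [X in (_ <= X)%N](bigID (fun j : 'I_k => (j < d)%N)) /= leq_addr.
apply: le_trans _ b3; apply: le_trans _ K; apply: lerD; [exact: b1 | exact: b2].
Qed.
End L.

Section PJ.
Local Open Scope nat_scope.
Lemma perj_nat k d r n (G : 'I_r -> rel 'I_k) (m : {ffun 'I_r -> nat}) (i0 : 'I_r) :
  2 <= d -> d <= k -> G i0 =2 @G_first k d -> @feasible_vec k r n G m ->
  exists W : nat -> {set wd k n},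
   (forall c, c < m i0 -> #|W c| = \prod_(i | i != i0) m i) /\
   \sum_(c < m i0) #|Uset d (W c)| <= d ^ n.
Proof.
move=> d2 dk HG [mpos [E HE]].
set N := \max_i m i.
have mN : forall i, m i <= N by move=> i; apply: leq_bigmax.
pose toN (a : {ffun 'I_r -> 'I_N}) : {ffun 'I_r -> nat} := [ffun i => nat_of_ord (a i)].
have toNb : forall a : {ffun 'I_r -> 'I_N}, [forall i, a i < m i] -> forall j, toN a j < m j.
  by move=> a /forallP h j; rewrite ffunE.
pose A c := [set a : {ffun 'I_r -> 'I_N} | [forall i, a i < m i] && (nat_of_ord (a i0) == c)].
pose W c := [set (E (toN a) : wd k n) | a in A c].
exists W; split.
  move=> c cm.
  have inj : {in A c &, injective (fun a => E (toN a) : wd k n)}.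
    move=> a a'; rewrite !inE => /andP [ha /eqP h0] /andP [ha' /eqP h0'] Eq.
    apply/ffunP => i; apply/val_inj; apply/eqP; apply/negPn/negP => ne.
    have := HE i (toN a) (toN a') (toNb _ ha) (toNb _ ha').
    rewrite !ffunE => /(_ ne) [t [/negP nt _]]; apply: nt; by rewrite Eq.
  rewrite card_in_imset //.
  have cN : c < N by apply: leq_trans cm (mN i0).
  have eqA : A c =i pfamily (Ordinal cN) [pred i | i != i0] (fun i => [pred y : 'I_N | y < m i]).
    move=> a; rewrite inE; apply/andP/pfamilyP.
      case=> /forallP ha /eqP h0; split.
        apply/fintype.subsetP => i; rewrite !inE; apply: contraNN => /eqP ->.
        by apply/eqP/val_inj.
      by move=> i _; rewrite inE ha.
    case=> /fintype.subsetP hs hF.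
    have e0 : a i0 = Ordinal cN.
      apply/eqP; apply/negPn/negP => h; have := hs i0; rewrite !inE eqxx /=.
      by move=> /(_ h).
    split; last by rewrite e0.
    apply/forallP => i; case: (eqVneq i i0) => [->|ne]; first by rewrite e0.
    by have := hF i; rewrite !inE => /(_ ne).
  rewrite (eq_card eqA) card_pfamily foldrE big_map big_enum /=.
  by apply: eq_bigr => i _; rewrite cardlt.
have disj : forall c c' : 'I_(m i0), c != c' -> [disjoint Uset d (W c) & Uset d (W c')].
  move=> c c' ne; apply/pred0P => z /=; apply/negbTE/negP => /andP [/UsetP [zd [x xW xz]] /UsetP [_ [y yW yz]]].
  move: xW yW => /imsetP [a aA Ex] /imsetP [a' aA' Ey]; subst x y.
  move: aA aA'; rewrite !inE => /andP [ha /eqP h0] /andP [ha' /eqP h0'].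
  have ne' : toN a i0 != toN a' i0 by rewrite !ffunE h0 h0'.
  have [t [nt]] := HE i0 (toN a) (toN a') (toNb _ ha) (toNb _ ha') ne'.
  rewrite HG /G_first nt /= negb_or -!ltnNge => /andP [l1 l2].
  by move/negP: nt; apply; rewrite -(xz t l1) -(yz t l2).
have -> : \sum_(c < m i0) #|Uset d (W c)| = #|\bigcup_(c < m i0) Uset d (W c)|.
  rewrite -sum1_card (partition_disjoint_bigcup _ _ disj) /=.
  by apply: eq_bigr => c _; rewrite sum1_card.
have sub : \bigcup_(c < m i0) Uset d (W c) \subset ffun_on [pred y : 'I_k | y < d].
  apply/fintype.subsetP => z /bigcupP [c _ /UsetP [zd _]].
  by apply/ffun_onP => t; rewrite inE zd.
apply: leq_trans (subset_leq_card sub) _.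
by rewrite card_ffun_on card_ord cardlt.
Qed.

End PJ.

Section PR.
Variable R : realType.
Local Open Scope ring_scope.

Lemma perj_real k d r n (G : 'I_r -> rel 'I_k) (m : {ffun 'I_r -> nat}) (i0 : 'I_r) :
  (2 <= d)%N -> (d <= k)%N -> G i0 =2 @G_first k d -> @feasible_vec k r n G m ->
  ln ((m i0)%:R : R) + ln (d%:R : R) / ln (k%:R : R) * ln ((\prod_(i | i != i0) m i)%:R : R)
    <= n%:R * ln (d%:R : R).
Proof.
move=> d2 dk HG Hf.
have [W [hW hs]] := perj_nat d2 dk HG Hf.
have mpos := Hf.1.
have dR : (1 : R) < d%:R by rewrite ltr1n.
have kR : (1 : R) < k%:R by rewrite ltr1n; apply: leq_trans dk.
have lnd : 0 < ln (d%:R : R) by apply: ln_gt0.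
have lnk : 0 < ln (k%:R : R) by apply: ln_gt0.
have ldk : ln (d%:R : R) <= ln (k%:R : R).
  by rewrite ler_ln ?posrE ?ler_nat //; lra.
set e := ln (k%:R : R) / ln (d%:R : R).
have e1 : 1 <= e by rewrite /e ler_pdivlMr // mul1r.
have de : (d%:R : R) `^ e = k%:R.
  rewrite /powR gt_eqF; last lra.
  by rewrite /e mulfVK ?gt_eqF // lnK // posrE; lra.
set P := (\prod_(i | i != i0) m i)%N.
have P1 : (1 : R) <= P%:R by rewrite ler1n prodn_gt0.
have m01 : (1 : R) <= (m i0)%:R by rewrite ler1n.
set l := ln (d%:R : R) / ln (k%:R : R) * ln (P%:R : R).
have hc : forall c : 'I_(m i0), expR l <= #|Uset d (W c)|%:R.
  move=> c.
  have H := Lmain e1 de (ltnW d2) dk (W c).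
  rewrite hW // -/P in H.
  set u := (#|Uset d (W c)|%:R : R) in H *.
  have u0 : 0 < u.
    rewrite lt_neqAle ler0n andbT; apply/negP => /eqP u0.
    by move: H; rewrite -u0 powR0 ?gt_eqF //; [lra | lra].
  rewrite -[u]lnK ?posrE // ler_expR.
  have : ln (P%:R : R) <= e * ln u.
    rewrite -ln_powR ler_ln ?posrE //; [lra | by apply: powR_gt0].
  rewrite /l /e => h.
  have q0 : 0 <= ln (d%:R : R) / ln (k%:R : R) by apply: divr_ge0; lra.
  apply: le_trans (ler_wpM2l q0 h) _.
  by rewrite fld4 ?gt_eqF.
have sum1 : (m i0)%:R * expR l <= ((d ^ n)%N)%:R :> R.
  have h1 : \sum_(c < m i0) expR l <= \sum_(c < m i0) (#|Uset d (W c)|%:R : R).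
    by apply: ler_sum => c _; exact: hc.
  rewrite sumr_const card_ord -mulr_natl in h1.
  apply: le_trans h1 _.
  by rewrite -natr_sum ler_nat.
have pos : 0 < (m i0)%:R * expR l :> R by apply: mulr_gt0; [lra | apply: expR_gt0].
have := sum1; rewrite -ler_ln ?posrE //; last by apply: lt_le_trans sum1.
rewrite lnM ?posrE ?expR_gt0 //; last lra.
by rewrite expRK natrX lnXn // -mulr_natl; lra.
Qed.
End PR.

Unset Implicit Arguments.
Local Open Scope R_scope.

Theorem corollary13 (d k r : nat) (G : 'I_r -> rel 'I_k) (Rv : 'I_r -> R) (alpha : R) :
  (2 <= d)%N -> (d <= k)%N -> (2 <= r)%N ->
  (forall i : 'I_r, nat_of_ord i = 0%N -> G i =2 @G_first k d) ->
  (forall i : 'I_r, nat_of_ord i <> 0%N -> is_graph (G i)) ->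
  0 <= alpha <= 1 ->
  (forall i : 'I_r, nat_of_ord i = 0%N -> Rv i = alpha * log2 (INR d)) ->
  feasible_rate G Rv ->
  \big[Rplus/0]_(i < r | nat_of_ord i != 0%N) Rv i <= (1 - alpha) * log2 (INR k).
Proof.
move=> d2 dk r2 HG0 Hg Ha Hrv [ns [ms [Hf [Hdiv Hcv]]]].
have r0 : (0 < r)%N by apply: ltn_trans r2.
pose i0 : 'I_r := Ordinal r0.
have HG : G i0 =2 @G_first k d := HG0 i0 erefl.
have dgt : 1 < INR d by rewrite INRE; apply/RltP; rewrite ltr1n.
have kgt : 1 < INR k by rewrite INRE; apply/RltP; rewrite ltr1n; apply: leq_trans dk.
have ld := ln_pos dgt.
have lk := ln_pos kgt.
have l2 : 0 < Rpower.ln 2 := ln2_pos.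
pose z j := log2 (INR (ms j i0)) / INR (ns j) * (Rpower.ln 2 / Rpower.ln (INR d)) +
  \big[Rplus/0]_(i < r | nat_of_ord i != 0%N)
     (log2 (INR (ms j i)) / INR (ns j) * (Rpower.ln 2 / Rpower.ln (INR k))).
have Hz : Un_cv z (Rv i0 * (Rpower.ln 2 / Rpower.ln (INR d)) +
   \big[Rplus/0]_(i < r | nat_of_ord i != 0%N) (Rv i * (Rpower.ln 2 / Rpower.ln (INR k)))).
  apply: CV_plus; first exact: (CV_mult _ _ _ _ (Hcv i0) (cv_const _)).
  apply: cv_sum_seq => i.
  exact: (CV_mult _ _ _ _ (Hcv i) (cv_const _)).
have [J HJ] := Hdiv 1%N.
have Hle : forall j, (J <= j)%N -> z j <= 1.
  move=> j Jj.
  have n1 := HJ j Jj.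
  have npos : 0 < INR (ns j) by apply: lt_0_INR; apply/ssrnat.ltP.
  have A := @perj_real R k d r (ns j) G (ms j) i0 d2 dk HG (Hf j).
  rewrite -!RlnE -!INRE in A.
  move/RleP: A => A.
  rewrite ln_prodn in A; last by move=> i; exact: (Hf j).1.
  rewrite (eq_bigl (fun i : 'I_r => nat_of_ord i != 0%N)) in A; last first.
    by move=> i; rewrite -val_eqE.
  by have := zj_bound npos ld lk l2 A; rewrite /z /log2.
have L := cv_le1 Hz Hle.
rewrite big_mulc in L.
have H0 : Rv i0 = alpha * (Rpower.ln (INR d) / Rpower.ln 2) by apply: Hrv.
exact: (final_arith ld lk l2 H0 L).
Qed.
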